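(* Let $F:[-1,1]^n\to[-\alpha,\alpha]$ be a multilinear polynomial, with $\alpha>0$, and let $0<\eta\le\frac{1}{\alpha n}$. Let $(x_t)$ be the projected gradient descent sequence $x_{t+1}=\Pi_{[-1,1]^n}(x_t-\eta\nabla F(x_t))$ with $x_0\in[-1,1]^n$. Then for every $t$, $$F(x_{t+1})-F(x_t)\le-\frac{\eta}{2}\|G(x_t)\|_2^2.$$
   Context: $\Pi_{[-1,1]^n}(y)=\arg\min_{x\in[-1,1]^n}\tfrac12\|x-y\|_2^2$ is the Euclidean projection onto the cube. The projected gradient mapping is $G(x)=\frac1\eta\big(x-\Pi_{[-1,1]^n}(x-\eta\nabla F(x))\big)$, so that $x_{t+1}=x_t-\eta G(x_t)$. *)

(* Defs.v *)
From HB Require Import structures.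
From mathcomp Require Import all_boot all_order all_algebra.
From mathcomp Require Import all_classical all_reals all_analysis.
Set Implicit Arguments. Unset Strict Implicit. Unset Printing Implicit Defensive.
Import Order.TTheory GRing.Theory Num.Theory.
Import numFieldNormedType.Exports.
Local Open Scope ring_scope.

Section Defs.
Variables (R : realType) (n : nat).

Definition vec := 'I_n -> R.

Definition in_cube (x : vec) : Prop := forall i, -1 <= x i <= 1.

Definition sqnorm (x : vec) : R := \sum_(i < n) x i ^+ 2.

Definition mlpoly (c : {set 'I_n} -> R) (x : vec) : R :=
  \sum_(S : {set 'I_n}) c S * \prod_(i in S) x i.

Definition upd (x : vec) (i : 'I_n) (t : R) : vec :=
  fun j => if j == i then t else x j.

Definition grad (F : vec -> R) (x : vec) : vec :=
  fun i => derive1 (fun t => F (upd x i t)) (x i).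

Definition is_cube_proj (P : vec -> vec) : Prop :=
  forall y, in_cube (P y) /\
    forall z, in_cube z ->
      sqnorm (fun i => P y i - y i) / 2 <= sqnorm (fun i => z i - y i) / 2.

Definition Gmap (P : vec -> vec) (F : vec -> R) (eta : R) (x : vec) : vec :=
  fun i => (x i - P (fun j => x j - eta * grad F x j) i) / eta.

End Defs.

(* Main.v *)
Require Import Defs.
From HB Require Import structures.
From mathcomp Require Import all_boot all_order all_algebra.
From mathcomp Require Import all_classical all_reals all_analysis.
From mathcomp Require Import ring lra.
Import Order.TTheory GRing.Theory Num.Theory.
Local Open Scope ring_scope.

Lemma derive1_affine (R : realType) (a b x : R) :
  derive1 (fun t : R => a + t * b) x = b.
Proof.
rewrite derive1E.
have H : is_derive x 1 (fun t : R => a + t * b) b.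
  apply: DeriveDef.
    apply: derivableD; first exact: derivable_cst.
    apply: derivableM; [exact: derivable_id | exact: derivable_cst].
  rewrite deriveD; last 2 first.
    exact: derivable_cst.
    apply: derivableM; [exact: derivable_id | exact: derivable_cst].
  rewrite deriveM; [|exact: derivable_id | exact: derivable_cst].
  rewrite !derive_cst derive_id scaler0 !add0r.
  by rewrite -[RHS]mulr1.
exact: derive_val.
Qed.

Section Gen.
Variables (R : realType) (n : nat) (c : {set 'I_n} -> R).
Local Notation F := (mlpoly c).
Local Notation vec := (vec R n).

Lemma upd_upd (y : vec) i a b : upd (upd y i a) i b = upd y i b.
Proof. by apply: funext => j; rewrite /upd; case: eqP. Qed.

Lemma upd_id (y : vec) i : upd y i (y i) = y.
Proof. by apply: funext => j; rewrite /upd; case: eqP => [->|]. Qed.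

Lemma upd_C (y : vec) i j a b : i != j ->
  upd (upd y i a) j b = upd (upd y j b) i a.
Proof.
move=> ij; apply: funext => k; rewrite /upd.
case: (k =P j) => [kj|]; case: (k =P i) => // ki.
by move: ij; rewrite -ki kj eqxx.
Qed.

Lemma upd_cube (y : vec) i a : in_cube y -> -1 <= a <= 1 -> in_cube (upd y i a).
Proof. by move=> hy ha j; rewrite /upd; case: eqP. Qed.

Lemma affine_ex (x : vec) i : exists A B, forall u, F (upd x i u) = A + u * B.
Proof.
exists (\sum_S c S * (if i \in S then 0 else \prod_(j in S) x j)).
exists (\sum_S c S * (if i \in S then \prod_(j in S | j != i) x j else 0)).
move=> u; rewrite /mlpoly mulr_sumr -big_split /=; apply: eq_bigr => S _.
case: (boolP (i \in S)) => iS.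
- rewrite (bigD1 i) //= /upd eqxx.
  rewrite (eq_bigr (fun j => x j)); last by move=> j /andP[_ /negPf ->].
  by rewrite mulr0 add0r mulrCA.
- rewrite (eq_bigr (fun j => x j)) ?mulr0 ?addr0 //.
  move=> j jS; rewrite /upd; case: (j =P i) => // ji.
  by move: iS; rewrite -ji jS.
Qed.

Lemma affine (x : vec) i u :
  F (upd x i u) = F (upd x i 0) + u * (F (upd x i 1) - F (upd x i 0)).
Proof. have [A [B H]] := affine_ex x i. rewrite !H. ring. Qed.

Definition slope (y : vec) i := F (upd y i 1) - F (upd y i 0).

Lemma diff_upd (y : vec) i u v :
  F (upd y i u) - F (upd y i v) = (u - v) * slope y i.
Proof. rewrite /slope (affine y i u) (affine y i v). ring. Qed.

Lemma grad_slope (y : vec) i : grad F y i = slope y i.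
Proof.
rewrite /grad.
have -> : (fun t => F (upd y i t)) = (fun t => F (upd y i 0) + t * slope y i).
  by apply: funext => t; apply: affine.
exact: derive1_affine.
Qed.

Lemma cross (alpha : R) (y : vec) i j u v :
  (forall z, in_cube z -> `|F z| <= alpha) -> in_cube y -> i != j ->
  `|slope (upd y j u) i - slope (upd y j v) i| <= alpha * `|u - v|.
Proof.
move=> hb hy ij.
have ji : j != i by rewrite eq_sym.
pose f a b := F (upd (upd y i a) j b).
have hs : forall w, slope (upd y j w) i = f 1 w - f 0 w.
  by move=> w; rewrite /slope /f !(upd_C _ _ _ _ _ ji).
have hj : forall a b, f a b = f a 0 + b * (f a 1 - f a 0).
  by move=> a b; rewrite /f affine.
have hi : forall a b, f a b = f 0 b + a * (f 1 b - f 0 b).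
  move=> a b; rewrite /f -!(upd_C _ _ _ _ _ ji); exact: affine.
have bd : forall a b, -1 <= a <= 1 -> -1 <= b <= 1 -> -alpha <= f a b <= alpha.
  move=> a b ha hb'; rewrite -ler_norml; apply: hb.
  by apply: upd_cube => //; apply: upd_cube.
set q := f 1 1 - f 1 0 - f 0 1 + f 0 0.
have -> : slope (upd y j u) i - slope (upd y j v) i = (u - v) * q.
  rewrite !hs (hj 1 u) (hj 0 u) (hj 1 v) (hj 0 v) /q; ring.
have hq : `|q| <= alpha.
  have e1 := hj 1 (-1); have e2 := hj (-1) (-1); have e3 := hi (-1) 0;
  have e4 := hi (-1) 1; have e5 := hj (-1) 1.
  have b1 := bd 1 1; have b2 := bd 1 (-1); have b3 := bd (-1) 1;
  have b4 := bd (-1) (-1).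
  rewrite ler_norml /q.
  have t1 : -1 <= (1:R) <= 1 by rewrite lexx andbT; lra.
  have t2 : -1 <= (-1:R) <= 1 by rewrite lexx /=; lra.
  move: (b1 t1 t1) (b2 t1 t2) (b3 t2 t1) (b4 t2 t2).
  move=> /andP[? ?] /andP[? ?] /andP[? ?] /andP[? ?].
  apply/andP; split; lra.
rewrite normrM mulrC; apply: ler_wpM2r => //.
Qed.

End Gen.
Arguments slope {R n} c y i.
Arguments upd_upd {R n} y i a b.
Arguments upd_id {R n} y i.
Arguments diff_upd {R n} c y i u v.
Arguments cross {R n c alpha y i j u v}.
Arguments grad_slope {R n} c y i.

Lemma sumtri (R : realType) (a : nat -> R) N :
  2 * \sum_(0 <= k < N) (a k * \sum_(0 <= j < k) a j)
    <= N%:R * \sum_(0 <= k < N) a k ^+ 2.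
Proof.
elim: N => [|N IH]; first by rewrite !big_geq // mulr0 mul0r.
rewrite !big_nat_recr //=.
have h1 : 2 * (a N * \sum_(0 <= j < N) a j)
    <= N%:R * a N ^+ 2 + \sum_(0 <= k < N) a k ^+ 2.
  rewrite mulrA mulr_sumr.
  have -> : N%:R * a N ^+ 2 + \sum_(0 <= k < N) a k ^+ 2
      = \sum_(0 <= j < N) (a N ^+ 2 + a j ^+ 2).
    by rewrite big_split /= sumr_const_nat subn0 mulr_natl.
  apply: ler_sum_nat => j _.
  have := sqr_ge0 (a N - a j); rewrite sqrrB; lra.
have h2 : 0 <= a N ^+ 2 by apply: sqr_ge0.
have h3 : 0 <= \sum_(0 <= k < N) a k ^+ 2.
  by apply: sumr_ge0 => k _; apply: sqr_ge0.
rewrite -addn1 natrD; lra.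
Qed.

Section Proj.
Variables (R : realType) (n : nat) (P : vec R n -> vec R n).
Hypothesis HP : is_cube_proj P.

Lemma proj_coord y i w : -1 <= w <= 1 -> (P y i - y i) ^+ 2 <= (w - y i) ^+ 2.
Proof.
move=> hw.
have [hc hmin] := HP y.
have := hmin (upd (P y) i w) (@upd_cube _ _ _ i w hc hw).
rewrite /sqnorm (bigD1 i) //= [X in _ <= X / 2](bigD1 i) //= /upd eqxx.
rewrite [X in _ <= (_ + X) / 2](eq_bigr (fun j => (P y j - y j) ^+ 2)); last first.
  by move=> j /negPf ->.
lra.
Qed.

Lemma proj_var y i z : -1 <= z <= 1 -> (y i - P y i) * (z - P y i) <= 0.
Proof.
move=> /andP[z1 z2].
have [hc _] := HP y.
have /andP[p1 p2] := hc i.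
have m1 : -1 <= (-1 : R) <= 1 by apply/andP; split; lra.
have o1 : -1 <= (1 : R) <= 1 by apply/andP; split; lra.
case: (ltrP (y i) (-1)) => h1.
  have := @proj_coord y i _ m1.
  move=> hq.
  have hp : P y i <= -1.
    rewrite leNgt; apply/negP => hp.
    have : 0 < (P y i + 1) * (P y i - 1 - 2 * y i) by apply: mulr_gt0; lra.
    nra.
  have -> : P y i = -1 by apply: le_anti; rewrite hp p1.
  nra.
case: (ltrP 1 (y i)) => h2.
  have := @proj_coord y i _ o1.
  move=> hq.
  have hp : 1 <= P y i.
    rewrite leNgt; apply/negP => hp.
    have : 0 < (1 - P y i) * (2 * y i - 1 - P y i) by apply: mulr_gt0; lra.
    nra.
  have -> : P y i = 1 by apply: le_anti; rewrite hp p2.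
  nra.
have hy : -1 <= y i <= 1 by apply/andP; split.
have := @proj_coord y i _ hy; rewrite subrr expr0n /= => h.
have -> : P y i = y i.
  have h0 : (P y i - y i) ^+ 2 = 0 by apply: le_anti; rewrite h sqr_ge0.
  by move/eqP: h0; rewrite expf_eq0 /= subr_eq0 => /eqP.
by rewrite subrr mul0r.
Qed.

End Proj.

Section Main.
Variables (R : realType) (m : nat) (c : {set 'I_m.+1} -> R) (alpha : R).
Local Notation N := m.+1.
Local Notation F := (mlpoly c).
Hypothesis hb : forall z, in_cube z -> `|F z| <= alpha.
Variables (x p : vec R N).
Hypotheses (hx : in_cube x) (hp : in_cube p).

Definition zz (k : nat) : vec R N := fun j => if (j < k)%N then p j else x j.
Definition dd (k : nat) : R := p (inord k) - x (inord k).

Lemma zz_cube k : in_cube (zz k).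
Proof. by move=> j; rewrite /zz; case: ifP. Qed.

Lemma zz0 : zz 0 = x.
Proof. by apply: funext => j; rewrite /zz ltn0. Qed.

Lemma zzN : zz N = p.
Proof. by apply: funext => j; rewrite /zz ltn_ord. Qed.

Lemma zzS {k} : (k < N)%N -> zz k.+1 = upd (zz k) (inord k) (p (inord k)).
Proof.
move=> hk; apply: funext => j; rewrite /zz /upd ltnS leq_eqVlt.
case: (j =P inord k) => [->|ne]; first by rewrite inordK // eqxx.
have -> : (nat_of_ord j == k) = false.
  apply/negP => /eqP e; apply: ne; apply: val_inj; by rewrite /= inordK.
by [].
Qed.

Lemma zz_at {k} : (k < N)%N -> zz k (inord k) = x (inord k).
Proof. by move=> hk; rewrite /zz inordK // ltnn. Qed.

Lemma zz_upd {k} : (k < N)%N -> zz k = upd (zz k) (inord k) (x (inord k)).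
Proof. by move=> hk; rewrite -(zz_at hk) upd_id. Qed.

Lemma tele k : (k <= N)%N ->
  F (zz k) - F x = \sum_(0 <= j < k) dd j * slope c (zz j) (inord j).
Proof.
elim: k => [|k IH] hk; first by rewrite zz0 subrr big_geq.
have hk' : (k < N)%N by [].
rewrite big_nat_recr //= -IH; last by apply: ltnW.
have : F (zz k.+1) - F (zz k) = dd k * slope c (zz k) (inord k).
  by rewrite (zzS hk') {2}(zz_upd hk') diff_upd.
lra.
Qed.

Lemma drift {k} : (k < N)%N -> forall k', (k' <= k)%N ->
  `|slope c (zz k') (inord k) - slope c x (inord k)|
    <= alpha * \sum_(0 <= j < k') `|dd j|.
Proof.
move=> hk k'; elim: k' => [|k' IH] hk'.
  by rewrite zz0 subrr normr0 big_geq // mulr0.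
have hk'N : (k' < N)%N by apply: leq_ltn_trans (ltnW hk') hk.
have ne : inord k != inord k' :> 'I_N.
  apply/negP => /eqP /(congr1 val); rewrite /= !inordK // => e.
  by move: hk'; rewrite e ltnn.
rewrite big_nat_recr //= mulrDr.
apply: le_trans (ler_distD (slope c (zz k') (inord k)) _ _) _.
rewrite addrC; apply: lerD; first by apply: IH; apply: ltnW.
rewrite (zzS hk'N) {2}(zz_upd hk'N) /dd.
by apply: cross => //; apply: zz_cube.
Qed.

Lemma smooth :
  F p - F x <= \sum_(0 <= k < N)
     (dd k * slope c x (inord k) + alpha * (`|dd k| * \sum_(0 <= j < k) `|dd j|)).
Proof.
rewrite -zzN tele //.
apply: ler_sum_nat => k /andP[_ hk].
have hd := drift hk k (leqnn k).
rewrite -[dd k * slope c (zz k) _](subrK (dd k * slope c x (inord k))) -mulrBr.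
rewrite addrC lerD2l.
apply: le_trans (ler_norm _) _.
rewrite normrM mulrCA; apply: ler_wpM2l => //.
Qed.

End Main.
Arguments dd {R m} x p k.

Theorem lemma9 (R : realType) (n : nat) (c : {set 'I_n} -> R) (alpha eta : R)
  (P : vec R n -> vec R n) (x : nat -> vec R n) :
  0 < alpha ->
  (forall y, in_cube y -> `|mlpoly c y| <= alpha) ->
  0 < eta -> eta <= 1 / (alpha * n%:R) ->
  is_cube_proj P ->
  in_cube (x 0%N) ->
  (forall t, x t.+1 = P (fun i => x t i - eta * grad (mlpoly c) (x t) i)) ->
  forall t, mlpoly c (x t.+1) - mlpoly c (x t)
            <= - (eta / 2) * sqnorm (Gmap P (mlpoly c) eta (x t)).
Proof.
move=> ha hb he hel HP hx0 hrec t.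
case: n c P x hb hel HP hx0 hrec => [|m] c P x hb hel HP hx0 hrec.
  by move: hel; rewrite mulr0 invr0 mulr0 => /(lt_le_trans he); rewrite ltxx.
have cube : forall t, in_cube (x t).
  by elim => // t' _; rewrite hrec; exact: (HP _).1.
set xt := x t; set p := x t.+1.
have hp : p = P (fun i => xt i - eta * grad (mlpoly c) xt i) := hrec t.
rewrite /Gmap -hp.
have hs := @smooth R m c alpha hb xt p (cube t) (cube t.+1).
set u := eta^-1.
have hu : 0 < u by rewrite invr_gt0.
have heu : eta * u = 1 by rewrite mulfV // gt_eqF.
have hproj : forall k, dd xt p k * slope c xt (inord k) <= - (dd xt p k ^+ 2) * u.
  move=> k.
  have hv := @proj_var R _ P HP (fun i => xt i - eta * grad (mlpoly c) xt i)
     (inord k) (xt (inord k)) (cube t (inord k)).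
  rewrite -hp /= grad_slope in hv.
  rewrite /dd.
  set a := p (inord k) - xt (inord k) in hv *.
  set s := slope c xt (inord k) in hv *.
  have e : a * s = u * (eta * (a * s)) by rewrite !mulrA [u * eta]mulrC heu mul1r.
  rewrite e.
  suff h : u * (a ^+ 2 + eta * (a * s)) <= 0.
    move: h; rewrite mulrDr; lra.
  apply: mulr_ge0_le0; first exact: ltW.
  rewrite /a; rewrite /a in hv; nra.
set D := \sum_(0 <= k < m.+1) dd xt p k ^+ 2.
set S := \sum_(0 <= k < m.+1) (`|dd xt p k| * \sum_(0 <= j < k) `|dd xt p j|).
have h1 : mlpoly c p - mlpoly c xt <= - D * u + alpha * S.
  apply: le_trans hs _.
  have -> : - D * u + alpha * S = \sum_(0 <= k < m.+1)
      (- (dd xt p k ^+ 2) * u + alpha * (`|dd xt p k| * \sum_(0 <= j < k) `|dd xt p j|)).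
    by rewrite big_split /= -mulr_sumr -mulr_suml sumrN.
  apply: ler_sum_nat => k _; rewrite lerD2r; exact: hproj.
have h2 : 2 * S <= m.+1%:R * D.
  have := @sumtri R (fun k => `|dd xt p k|) m.+1.
  move=> h; apply: le_trans h _; rewrite /D; apply: ler_wpM2l => //.
  by apply: ler_sum_nat => k _; rewrite real_normK ?num_real.
have h3 : alpha * m.+1%:R <= u.
  have : eta * (alpha * m.+1%:R) <= 1.
    by rewrite -ler_pdivlMr ?mulr_gt0 ?ltr0Sn // mul1r -div1r.
  move=> h; have := ler_wpM2l (ltW hu) h.
  by rewrite !mulrA [u * eta]mulrC heu mul1r mulr1.
have hD : 0 <= D by apply: sumr_ge0 => k _; apply: sqr_ge0.
have hS : 0 <= S.
  by apply: sumr_ge0 => k _; apply: mulr_ge0 => //; apply: sumr_ge0.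
have -> : sqnorm (fun i => (xt i - p i) / eta) = D * u ^+ 2.
  rewrite /sqnorm /D mulr_suml big_mkord.
  apply: eq_bigr => i _; rewrite /dd inord_val /u; ring.
have -> : - (eta / 2) * (D * u ^+ 2) = - (D * u) / 2.
  rewrite expr2 -[RHS]mulr1 -heu; field; by rewrite (gt_eqF hu) (gt_eqF he).
have k1 : 0 <= alpha * (m.+1%:R * D - 2 * S) by apply: mulr_ge0; lra.
have k2 : 0 <= D * (u - alpha * m.+1%:R) by apply: mulr_ge0; lra.
nra.
Qed.
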